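(* Let $\mathcal{J}_1$ and $\mathcal{J}_2$ be two disjoint sets of jobs, let $S_1$ be a feasible schedule for $\mathcal{J}_1$ and $S_2$ a feasible schedule for $\mathcal{J}_2$. Let $S := S_1 + S_2$ be the schedule for $\mathcal{J}_1\cup\mathcal{J}_2$ which at every time $t$ processes each job $j\in\mathcal{J}_1$ at speed $s_{1,j}(t)$ and each job $j\in\mathcal{J}_2$ at speed $s_{2,j}(t)$ (so the total speed is $s(t)=s_1(t)+s_2(t)$). Then $$\mathrm{cost}(S,\mathcal{J}_1\cup\mathcal{J}_2)\le\Big(\mathrm{cost}(S_1,\mathcal{J}_1)^{1/\alpha}+\mathrm{cost}(S_2,\mathcal{J}_2)^{1/\alpha}\Big)^{\alpha}.$$
   Context: General Energy-efficient Scheduling (GES) setting. There is a single machine. A job is a tuple $(j,r_j,p_j)$ (possibly with further parameters such as a weight $v_j>0$ or a deadline $d_j$) consisting of an identifier $j$, a release time $r_j\ge 0$ and a processing time $p_j>0$. A feasible schedule $S$ for a job set $\mathcal{J}$ is a family of nonnegative measurable functions $\{s_j(t)\}_{j\in\mathcal{J},t\ge0}$ with $s_j(t)=0$ for $t<r_j$ and $\int_{r_j}^\infty s_j(t)\,dt=p_j$; its total speed is $s(t)=\sum_j s_j(t)$. The energy is $E(S)=\int_{t\ge0}s(t)^\alpha\,dt$ for a fixed constant $\alpha>1$. The work profile of job $j$ is $w_j^S(t)=p_j-\int_{r_j}^t s_j(u)\,du$ for $t\ge r_j$. The quality cost $F(S,\mathcal{J})=f\big((W^S_j,j)_{j\in\mathcal{J}}\big)$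 is a real-valued function depending only on the work profiles $W_j^S=\{w_j^S(t)\}_{t\ge r_j}$ of the jobs in $\mathcal{J}$ and on their parameters (so for $\mathcal{J}'\subseteq\mathcal{J}$, $F(S,\mathcal{J}')$ is $f$ evaluated on the work profiles of the jobs of $\mathcal{J}'$). $F$ is assumed subadditive: $F(S,\mathcal{J}_1\cup\mathcal{J}_2)\le F(S,\mathcal{J}_1)+F(S,\mathcal{J}_2)$, and monotone: if $w^S_j(t)\le w^{S'}_j(t)$ for all $j\in\mathcal{J}$ and $t\ge r_j$ then $F(S,\mathcal{J})\le F(S',\mathcal{J})$. The objective is $\mathrm{cost}(S,\mathcal{J})=E(S)+F(S,\mathcal{J})$. *)

(* Defs.v *)
From HB Require Import structures.
From mathcomp Require Import all_boot all_order all_algebra.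
From mathcomp Require Import all_classical all_reals all_analysis.
Set Implicit Arguments. Unset Strict Implicit. Unset Printing Implicit Defensive.
Import Order.TTheory GRing.Theory Num.Theory.
Local Open Scope classical_set_scope.
Local Open Scope ring_scope.

(* Job identifiers range over a finite type J; a job j has release time r j
   and processing time p j (further parameters are encoded in the identifier,
   on which the quality cost F may depend arbitrarily).
   A schedule is a family of speed functions s : J -> R -> R; a schedule
   "for the job set A" processes only jobs of A (s j = 0 for j \notin A). *)

Definition total_speed (R : realType) (J : finType) (s : J -> R -> R)
  (A : {set J}) (t : R) : R := \sum_(j in A) s j t.

Definition energy (R : realType) (J : finType) (alpha : R) (s : J -> R -> R)
  (A : {set J}) : \bar R :=
  (\int[@lebesgue_measure R]_(t in `[0%R, +oo[) ((total_speed s A t) `^ alpha)%:E)%E.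

(* work profile w_j(t) = p_j - int_{r_j}^t s_j(u) du  (meaningful for t >= r_j) *)
Definition work_profile (R : realType) (J : finType) (r p : J -> R)
  (s : J -> R -> R) (j : J) (t : R) : R :=
  p j - fine (\int[@lebesgue_measure R]_(u in `[r j, t]) (s j u)%:E)%E.

Definition feasible (R : realType) (J : finType) (r p : J -> R)
  (s : J -> R -> R) (A : {set J}) : Prop :=
  forall j : J,
    (j \in A ->
       measurable_fun setT (s j)
       /\ (forall t, 0 <= s j t)
       /\ (forall t, t < r j -> s j t = 0)
       /\ (\int[@lebesgue_measure R]_(t in `[r j, +oo[) (s j t)%:E)%E = (p j)%:E)
    /\ (j \notin A -> forall t, s j t = 0).

(* F(S, A) = f((W_j^S, j)_{j in A}): F takes the work-profile family and the job set. *)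
Definition quality_cost (R : realType) (J : finType) (r : J -> R)
  (F : (J -> R -> R) -> {set J} -> R) : Prop :=
  (forall (w w' : J -> R -> R) (A : {set J}),
      (forall j, j \in A -> forall t, r j <= t -> w j t = w' j t) ->
      F w A = F w' A)
  /\ (forall (w : J -> R -> R) (A B : {set J}), F w (A :|: B) <= F w A + F w B)
  /\ (forall (w w' : J -> R -> R) (A : {set J}),
      (forall j, j \in A -> forall t, r j <= t -> w j t <= w' j t) ->
      F w A <= F w' A)
  (* nonnegative (needed for cost^(1/alpha) to make sense) *)
  /\ (forall (w : J -> R -> R) (A : {set J}), 0 <= F w A).

Definition cost (R : realType) (J : finType) (alpha : R) (r p : J -> R)
  (F : (J -> R -> R) -> {set J} -> R) (s : J -> R -> R) (A : {set J}) : \bar R :=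
  (energy alpha s A + (F (work_profile r p s) A)%:E)%E.

Definition sched_add (R : realType) (J : finType) (s1 s2 : J -> R -> R) :
  J -> R -> R := fun j t => s1 j t + s2 j t.

(* Main.v *)
Require Import Defs.
From HB Require Import structures.
From mathcomp Require Import all_boot all_order all_algebra.
From mathcomp Require Import all_classical all_reals all_analysis.
Import Order.TTheory GRing.Theory Num.Theory.
Local Open Scope ring_scope.
Section M2.
Context {R : realType}.
Definition f2 (a b : R) (n : nat) : R := match n with 0%nat => a | 1%nat => b | _ => 0 end.

Lemma Lnorm_f2 (a b p : R) : 0 <= a -> 0 <= b -> 0 < p ->
  ('N[@counting nat R]_p%:E[EFin \o f2 a b] = ((a `^ p + b `^ p) `^ p^-1)%:E)%E.
Proof.
move=> a0 b0 p0.
rewrite Lnorm_counting//.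
rewrite (nneseries_split 0 2); last by move=> k; rewrite poweR_ge0.
rewrite add0n ereal_series_cond eseries0 ?adde0; last first.
  by move=> [//|] [//|n _]; rewrite /= normr0 powR0// gt_eqF.
rewrite big_mkord 2!big_ord_recr/= big_ord0 add0e.
have -> : (((`|a| `^ p)%:E + (`|b| `^ p)%:E)%R = (a `^ p + b `^ p)%:E :> \bar R).
  by rewrite !ger0_norm.
by rewrite poweR_EFin.
Qed.

Lemma minkowski2 (a1 a2 b1 b2 p : R) :
  0 <= a1 -> 0 <= a2 -> 0 <= b1 -> 0 <= b2 -> 1 <= p ->
  ((a1 + b1) `^ p + (a2 + b2) `^ p) `^ p^-1 <=
  (a1 `^ p + a2 `^ p) `^ p^-1 + (b1 `^ p + b2 `^ p) `^ p^-1.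
Proof.
move=> a10 a20 b10 b20 p1.
have p0 : 0 < p by apply: lt_le_trans p1.
have mf a b : measurable_fun setT (f2 a b) by [].
have h := minkowski_EFin (@counting nat R) (mf a1 a2) (mf b1 b2) p1.
rewrite !Lnorm_f2// in h.
rewrite -lee_fin EFinD; apply: le_trans h.
rewrite -Lnorm_f2 ?addr_ge0//.
rewrite le_eqVlt; apply/orP; left; apply/eqP/eq_Lnorm => -[|[|n]] /=; rewrite ?addr0 //.
Qed.
End M2.

Section Fin.
Context {R : realType}.

Lemma powK (x a : R) : 0 <= x -> a != 0 -> (x `^ a^-1) `^ a = x.
Proof. by move=> x0 a0; rewrite -powRrM mulVf// powRr1. Qed.

Lemma final_real (n1 n2 f1 f2 a : R) : 0 <= n1 -> 0 <= n2 -> 0 <= f1 -> 0 <= f2 ->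
  1 <= a ->
  (n1 + n2) `^ a + f1 + f2 <= ((n1 `^ a + f1) `^ a^-1 + (n2 `^ a + f2) `^ a^-1) `^ a.
Proof.
move=> n10 n20 f10 f20 a1.
have a0 : a != 0 by rewrite gt_eqF// (lt_le_trans _ a1).
have ai0 : 0 <= a by rewrite (le_trans _ a1).
set g1 := f1 `^ a^-1; set g2 := f2 `^ a^-1.
have g10 : 0 <= g1 by apply: powR_ge0.
have g20 : 0 <= g2 by apply: powR_ge0.
have gf1 : g1 `^ a = f1 by rewrite powK.
have gf2 : g2 `^ a = f2 by rewrite powK.
have h1 : f1 + f2 <= (g1 + g2) `^ a.
  have := minkowski2 _ _ _ _ _ g10 (lexx 0) (lexx 0) g20 a1.
  rewrite !addr0 !add0r powR0// addr0 add0r gf1 gf2 /g1 /g2 => h.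
  rewrite -[f1 + f2](@powK _ a) ?addr_ge0//.
  have hx : (0 <= (f1 + f2) `^ a^-1) by apply: powR_ge0.
  have hy : (0 <= f1 `^ a^-1 + f2 `^ a^-1) by rewrite addr_ge0 // powR_ge0.
  exact: (ge0_ler_powR ai0 hx hy h).
have h2 := minkowski2 _ _ _ _ _ n10 g10 n20 g20 a1.
rewrite gf1 gf2 in h2.
apply: (@le_trans _ _ ((n1 + n2) `^ a + (g1 + g2) `^ a)).
  by rewrite -addrA lerD2l.
set L := (n1 + n2) `^ a + (g1 + g2) `^ a.
have L0 : 0 <= L by rewrite /L addr_ge0 // powR_ge0.
have -> : L = (L `^ a^-1) `^ a by rewrite powK.
have hx : (0 <= L `^ a^-1) by apply: powR_ge0.
have hy : (0 <= (n1 `^ a + f1) `^ a^-1 + (n2 `^ a + f2) `^ a^-1) by rewrite addr_ge0 // powR_ge0.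
exact: (ge0_ler_powR ai0 hx hy h2).
Qed.
Local Open Scope ereal_scope.
Lemma final_ereal (N N1 N2 : \bar R) (Fs F1 F2 a : R) :
  0 <= N -> 0 <= N1 -> 0 <= N2 -> (0 <= F1)%R -> (0 <= F2)%R -> (1 < a)%R ->
  N <= N1 + N2 -> (Fs <= F1 + F2)%R ->
  N `^ a + Fs%:E <= ((N1 `^ a + F1%:E) `^ a^-1 + (N2 `^ a + F2%:E) `^ a^-1) `^ a.
Proof.
move=> N0 N10 N20 F10 F20 a1 NN FF.
have a0 : a != 0%R by rewrite gt_eqF// (lt_trans _ a1).
have ai0 : (a^-1 != 0)%R by rewrite invr_eq0.
case: N1 N10 NN => [n1| |] //; last first.
  move=> _ _; rewrite poweRyr// addye// poweRyr// addye ?poweRyr ?leey//.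
  by rewrite gt_eqF// (lt_le_trans _ (poweR_ge0 _ _)).
case: N2 N20 => [n2| |] //; last first.
  move=> _ _ _; rewrite (poweRyr a0) addye// poweRyr// addey ?poweRyr ?leey//.
case: N N0 => [n| |] //; rewrite !lee_fin => n0 n20 n10 nn.
apply: le_trans (final_real _ _ _ _ _ n10 n20 F10 F20 (ltW a1)).
rewrite -addrA lerD//.
  by apply: ge0_ler_powR; rewrite ?nnegrE ?addr_ge0// ltW// (lt_trans _ a1).
Qed.
End Fin.
Section Sched.
Context {R : realType} {J : finType}.
Implicit Types (s : J -> R -> R) (A : {set J}) (r p : J -> R).

Lemma ts_split r p s1 s2 (J1 J2 : {set J}) (t : R) : [disjoint J1 & J2] ->
  feasible r p s1 J1 -> feasible r p s2 J2 ->
  total_speed (sched_add s1 s2) (J1 :|: J2) t = total_speed s1 J1 t + total_speed s2 J2 t.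
Proof.
move=> dis f1 f2; rewrite /total_speed /sched_add.
rewrite (eq_bigl [predU J1 & J2]); last by move=> j; rewrite !inE.
rewrite bigU //= !big_split /=.
rewrite [\sum_(i in J1) s2 i t]big1; last first.
  by move=> j jJ1; apply: (proj2 (f2 j)); rewrite (disjointFr dis jJ1).
rewrite [\sum_(i in J2) s1 i t]big1; last first.
  by move=> j jJ2; apply: (proj2 (f1 j)); rewrite (disjointFl dis jJ2).
by rewrite addr0 add0r.
Qed.

Lemma ts_ge0 r p s A (t : R) : feasible r p s A -> 0 <= total_speed s A t.
Proof.
by move=> f; apply: sumr_ge0 => j jA; have [h _] := f j; have [_ [h2 _]] := h jA; apply: h2.
Qed.

Lemma ts_neg r p s A (t : R) : (forall j, 0 <= r j) -> feasible r p s A -> t < 0 ->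
  total_speed s A t = 0.
Proof.
move=> r0 f t0; apply: big1 => j jA; have [h' _] := f j; have [_ [_ [h _]]] := h' jA.
by apply: h => //; apply: lt_le_trans t0 (r0 j).
Qed.

Lemma ts_meas r p s A : feasible r p s A ->
  measurable_fun setT (total_speed s A).
Proof.
move=> f; rewrite /total_speed.
under eq_fun do rewrite big_mkcond /=.
apply: measurable_sum => j.
case: (boolP (j \in A)) => jA /=.
  by have [h _] := f j; have [h2 _] := h jA; apply: h2.
exact: measurable_cst.
Qed.

Lemma energy_Lnorm s A (alpha : R) : alpha != 0 ->
  (forall t, 0 <= total_speed s A t) -> (forall t, t < 0 -> total_speed s A t = 0) ->
  energy alpha s A = ((Lnorm (@lebesgue_measure R) alpha%:E (EFin \o total_speed s A)) `^ alpha)%E.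
Proof.
move=> a0 tsge0 tsneg; rewrite /energy integral_mkcond poweR_Lnorm //.
apply: eq_integral => t _; rewrite patchE /=.
case: ifPn => tD.
  by rewrite ger0_norm // tsge0.
have tn : t < 0.
  rewrite ltNge; apply/negP => t0; move/negP: tD; apply.
  by rewrite inE /= in_itv /= t0.
by rewrite (tsneg _ tn) normr0 powR0.
Qed.

Lemma wp_eq r p s1 s2 (J1 J2 : {set J}) j (t : R) : [disjoint J1 & J2] ->
  feasible r p s2 J2 -> j \in J1 ->
  work_profile r p (sched_add s1 s2) j t = work_profile r p s1 j t.
Proof.
move=> dis f2 jJ1.
have E : sched_add s1 s2 j = s1 j.
  apply/funext => u; rewrite /sched_add (proj2 (f2 j)) ?addr0 //.
  by rewrite (disjointFr dis jJ1).
by rewrite /work_profile E.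
Qed.

Lemma wp_eq2 r p s1 s2 (J1 J2 : {set J}) j (t : R) : [disjoint J1 & J2] ->
  feasible r p s1 J1 -> j \in J2 ->
  work_profile r p (sched_add s1 s2) j t = work_profile r p s2 j t.
Proof.
move=> dis f1 jJ2.
have E : sched_add s1 s2 j = s2 j.
  apply/funext => u; rewrite /sched_add (proj2 (f1 j)) ?add0r //.
  by rewrite (disjointFl dis jJ2).
by rewrite /work_profile E.
Qed.
End Sched.

Theorem lemma1 (R : realType) (J : finType) (alpha : R) (r p : J -> R)
  (F : (J -> R -> R) -> {set J} -> R) (J1 J2 : {set J}) (s1 s2 : J -> R -> R) :
  1 < alpha ->
  (forall j, 0 <= r j) -> (forall j, 0 < p j) ->
  quality_cost r F ->
  [disjoint J1 & J2] ->
  feasible r p s1 J1 -> feasible r p s2 J2 ->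
  (cost alpha r p F (sched_add s1 s2) (J1 :|: J2)
   <= (cost alpha r p F s1 J1 `^ alpha^-1 + cost alpha r p F s2 J2 `^ alpha^-1) `^ alpha)%E.
Proof.
move=> a1 r0 _ [Fdep [Fsub [_ Fge0]]] dis f1 f2.
have a0 : alpha != 0 by rewrite gt_eqF // (lt_trans _ a1).
have tsE t := ts_split _ _ _ _ _ _ t dis f1 f2.
rewrite /cost (energy_Lnorm _ _ _ a0); last 2 first.
- by move=> t; rewrite tsE addr_ge0 // (ts_ge0 _ _ _ _ _ f1, ts_ge0 _ _ _ _ _ f2).
- by move=> t tn; rewrite tsE (ts_neg _ _ _ _ _ r0 f1 tn) (ts_neg _ _ _ _ _ r0 f2 tn) addr0.
rewrite (energy_Lnorm _ _ _ a0); last 2 first.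
- by move=> t; apply: (ts_ge0 _ _ _ _ _ f1).
- by move=> t tn; apply: (ts_neg _ _ _ _ _ r0 f1 tn).
rewrite (energy_Lnorm _ _ _ a0); last 2 first.
- by move=> t; apply: (ts_ge0 _ _ _ _ _ f2).
- by move=> t tn; apply: (ts_neg _ _ _ _ _ r0 f2 tn).
apply: final_ereal => //.
- exact: Lnorm_ge0.
- exact: Lnorm_ge0.
- exact: Lnorm_ge0.
- have -> : total_speed (sched_add s1 s2) (J1 :|: J2) = (total_speed s1 J1 \+ total_speed s2 J2)%R.
    by apply/funext => t; rewrite tsE.
  apply: minkowski_EFin.
  + exact: (ts_meas _ _ _ _ f1).
  + exact: (ts_meas _ _ _ _ f2).
  + exact: ltW.
- apply: (le_trans (Fsub _ J1 J2)); apply: lerD; rewrite le_eqVlt; apply/orP; left; apply/eqP/Fdep => j jJ t _.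
  + exact: (wp_eq _ _ _ _ _ _ _ _ dis f2 jJ).
  + exact: (wp_eq2 _ _ _ _ _ _ _ _ dis f1 jJ).
Qed.
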